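(* Fix widths $\mathbf{n}=(n_0,\dots,n_L)$, piecewise differentiable $h_1,\dots,h_L:\mathbb{R}\to\mathbb{R}$, a finite batch $\{(x_j,y_j)\}\subseteq\mathbb{R}^{n_0}\times\mathbb{R}^{n_L}$ and a cost function $\mathcal C$, and let $\mathcal L,\mathcal L_{\rm red},\iota_1,q_1,\iota_2,q_2,\iota$ be as in the context. Then: (1) $\iota=\iota_1\circ\iota_2$ and $\mathcal L\circ\iota=\mathcal L_{\rm red}$; (2) $\mathcal L\circ\iota_1=\mathcal L_{\rm red}\circ q_2$ on $\mathsf{Param}^{\rm int}(\mathbf{n})$; (3) for every $\mathbf{T}\in\mathsf{Param}^{\rm int}(\mathbf{n})$, $q_1\big(\nabla_{\iota_1(\mathbf{T})}\mathcal L\big)=\iota_2\big(\nabla_{q_2(\mathbf{T})}\mathcal L_{\rm red}\big)$.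
   Context: Merged notation: $\mathsf{Param}(\mathbf{n})=\prod_{i=1}^L\mathbb{R}^{n_i\times(n_{i-1}+1)}$, $\mathbf{A}=(A_i)$. Reduced widths: $n^{\rm red}_0=n_0$, $n^{\rm red}_i=\min(n_i,n^{\rm red}_{i-1}+1)$ for $1\le i\le L-1$, $n^{\rm red}_L=n_L$. For $h:\mathbb{R}\to\mathbb{R}$, $h^{(k)}(v)=h(|v|)v/|v|$ ($v\ne0$), $h^{(k)}(0)=0$. With $\rho_i=h_i^{(n_i)}$, the feedforward function of $\mathbf{A}$ is $F=F_L$, $F_0=\mathrm{id}$, $F_i(x)=\rho_i\big(A_i\,(1,F_{i-1}(x))\big)$, where $(1,v)\in\mathbb{R}^{1+n_{i-1}}$ prepends a 1. $\mathcal L(\mathbf{A})=\sum_j\mathcal C(F(x_j),y_j)$; $\mathcal L_{\rm red}$ on $\mathsf{Param}(\mathbf{n}^{\rm red})$ is defined the same way using $\rho^{\rm red}_i=h_i^{(n^{\rm red}_i)}$. The losses are assumed differentiable so gradients exist. $\mathsf{Param}^{\rm int}(\mathbf{n})$ is the subspace of $\mathbf{T}=(T_i)$ with the bottom-left $(n_i-n^{\rm red}_i)\times(1+n^{\rm red}_{i-1})$ block of each $T_i$ zero. $\iota_1:\mathsf{Param}^{\rm int}(\mathbf{n})\hookrightarrow\mathsf{Param}(\mathbf{n})$ is the inclusion; $q_1:\mathsf{Param}(\mathbf{n})\to\mathsf{Param}^{\rm int}(\mathbf{n})$ zeroes out that block in each $A_i$. $\iota_2:\mathsf{Param}(\mathbf{n}^{\rm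 red})\to\mathsf{Param}^{\rm int}(\mathbf{n})$ pads each $B_i$ with $n_i-n^{\rm red}_i$ zero rows at the bottom and $n_{i-1}-n^{\rm red}_{i-1}$ zero columns at the right, i.e. $B_i\mapsto\begin{bmatrix}B_i&0\\0&0\end{bmatrix}$; $q_2:\mathsf{Param}^{\rm int}(\mathbf{n})\to\mathsf{Param}(\mathbf{n}^{\rm red})$ extracts the top-left $n^{\rm red}_i\times(1+n^{\rm red}_{i-1})$ block of each $T_i$. $\iota:\mathsf{Param}(\mathbf{n}^{\rm red})\hookrightarrow\mathsf{Param}(\mathbf{n})$ places each $B_i$ in the top-left corner of an $n_i\times(1+n_{i-1})$ zero matrix. *)

(* Defs.v *)
From HB Require Import structures.
From mathcomp Require Import all_boot all_order all_algebra.
From mathcomp Require Import all_classical all_reals all_analysis.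

Set Implicit Arguments.
Unset Strict Implicit.
Unset Printing Implicit Defensive.
Import Order.TTheory GRing.Theory Num.Theory.
Local Open Scope ring_scope.

Section Defs.
Variable R : realType.

Definition mget {p q} (M : 'M[R]_(p, q)) (r c : nat) : R :=
  match (insub r : option 'I_p), (insub c : option 'I_q) with
  | Some r', Some c' => M r' c'
  | _, _ => 0
  end.

Definition vcast {p q} (v : 'cV[R]_p) : 'cV[R]_q := \col_(i < q) mget v i 0.

Definition vnorm {p} (v : 'cV[R]_p) : R := Num.sqrt (\sum_i v i 0 ^+ 2).

Definition radial (h : R -> R) {p} (v : 'cV[R]_p) : 'cV[R]_p :=
  if v == 0 then 0 else (h (vnorm v) / vnorm v) *: v.

Definition prepend1 {q} (v : 'cV[R]_q) : 'cV[R]_(q.+1) :=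
  \col_(j < q.+1) (if (j : nat) == 0%N then 1 else mget v j.-1 0).

(* Param(m) = prod_{i=1}^L R^{m_i x (m_{i-1}+1)}; the ordinal k : 'I_L
   stands for the layer i = k+1. *)
Definition Param (L : nat) (m : nat -> nat) :=
  forall k : 'I_L, 'M[R]_(m k.+1, (m k).+1).

Definition Anat L m (A : Param L m) (k : nat) : 'M[R]_(m k.+1, (m k).+1) :=
  match (insub k : option 'I_L) with
  | Some o => \matrix_(r, c) mget (A o) r c
  | None => 0
  end.

Fixpoint ff L m (hs : nat -> R -> R) (A : Param L m) (k : nat)
  : 'cV[R]_(m 0%N) -> 'cV[R]_(m k) :=
  match k as k0 return 'cV[R]_(m 0%N) -> 'cV[R]_(m k0) with
  | 0%N => fun x => x
  | k'.+1 => fun x => radial (hs k'.+1) (Anat A k' *m prepend1 (ff hs A k' x))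
  end.

Fixpoint nred_aux (n : nat -> nat) (i : nat) : nat :=
  match i with
  | 0%N => n 0%N
  | i'.+1 => minn (n i) (nred_aux n i').+1
  end.

Definition nred (L : nat) (n : nat -> nat) (i : nat) : nat :=
  match i with
  | 0%N => n 0%N
  | _.+1 => if i == L then n L else nred_aux n i
  end.

(* loss sum_j C(F(x_j), y_j) of a network with widths m (m_0 = n_0, m_L = n_L;
   vcast only transports vectors between these equal dimensions) *)
Definition loss L (n m : nat -> nat) (hs : nat -> R -> R)
  (C : 'cV[R]_(n L) -> 'cV[R]_(n L) -> R)
  (data : seq ('cV[R]_(n 0%N) * 'cV[R]_(n L))) (A : Param L m) : R :=
  \sum_(d <- data) C (vcast (ff hs A L (vcast d.1))) d.2.

Definition pert L m (A : Param L m) (k : 'I_L) (r c : nat) (t : R) : Param L m :=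
  fun k' => A k' + \matrix_(r', c')
     (if (k' == k) && ((r' : nat) == r) && ((c' : nat) == c) then t else 0).

(* gradient (w.r.t. the Frobenius inner product) = matrix of partial derivatives *)
Definition grad L m (F : Param L m -> R) (A : Param L m) : Param L m :=
  fun k => \matrix_(r, c) derive1 (fun t => F (pert A k r c t)) 0.

Definition padd L m (A B : Param L m) : Param L m := fun k => A k + B k.
Definition pdot L m (A B : Param L m) : R :=
  \sum_(k : 'I_L) \sum_r \sum_c A k r c * B k r c.
Definition pnorm L m (A : Param L m) : R :=
  \sum_(k : 'I_L) \sum_r \sum_c `|A k r c|.

Definition param_differentiable L m (F : Param L m -> R) (A : Param L m) : Prop :=
  exists G : Param L m, forall eps : R, 0 < eps -> exists2 delta : R, 0 < delta &
    forall D : Param L m, pnorm D < delta ->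
      `|F (padd A D) - F A - pdot G D| <= eps * pnorm D.

Definition piecewise_differentiable (h : R -> R) : Prop :=
  exists s : seq R, forall x : R, x \notin s -> derivable h x 1.

Definition is_int L n (T : Param L n) : Prop :=
  forall (k : 'I_L) (r : 'I_(n k.+1)) (c : 'I_((n k).+1)),
    (nred L n k.+1 <= r)%N -> (c <= nred L n k)%N -> T k r c = 0.

Definition ParamInt L n := {T : Param L n | is_int T}.

Definition iota_red L n (B : Param L (nred L n)) : Param L n :=
  fun k => \matrix_(r, c) mget (B k) r c.

Definition iota1 L n (T : ParamInt L n) : Param L n := proj1_sig T.

Definition pad L n (B : Param L (nred L n)) : Param L n :=
  fun k => \matrix_(r, c) mget (B k) r c.

Lemma pad_is_int L n (B : Param L (nred L n)) : is_int (pad B).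
Proof.
move=> k r c hr _; rewrite /pad mxE /mget.
by rewrite insubN // -leqNgt.
Qed.

Definition iota2 L n (B : Param L (nred L n)) : ParamInt L n :=
  exist _ (pad B) (pad_is_int B).

Definition zero_block L n (A : Param L n) : Param L n :=
  fun k => \matrix_(r, c)
    (if (nred L n k.+1 <= r)%N && (c <= nred L n k)%N then 0 else A k r c).

Lemma zero_block_is_int L n (A : Param L n) : is_int (zero_block A).
Proof. by move=> k r c hr hc; rewrite /zero_block mxE hr hc. Qed.

Definition q1 L n (A : Param L n) : ParamInt L n :=
  exist _ (zero_block A) (zero_block_is_int A).

Definition q2 L n (T : ParamInt L n) : Param L (nred L n) :=
  fun k => \matrix_(r, c) mget (proj1_sig T k) r c.

End Defs.

(* Main.v *)
Require Import Defs.
From HB Require Import structures.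
From mathcomp Require Import all_boot all_order all_algebra.
From mathcomp Require Import all_classical all_reals all_analysis.
Import Order.TTheory GRing.Theory Num.Theory.
Local Open Scope ring_scope.

Set Implicit Arguments.
Unset Strict Implicit.
Section Aux.
Variable R : realType.

Lemma mget_ord p q (M : 'M[R]_(p, q)) (i : 'I_p) (j : 'I_q) : mget M i j = M i j.
Proof. by rewrite /mget !valK. Qed.

Lemma mget_out p q (M : 'M[R]_(p, q)) r c : ~~ ((r < p) && (c < q))%N -> mget M r c = 0.
Proof.
rewrite negb_and /mget => /orP [h|h]; first by rewrite insubN.
by case: insub => // ?; rewrite insubN.
Qed.

Lemma mget_mx p q (f : 'I_p -> 'I_q -> R) r c :
  mget (\matrix_(i, j) f i j) r c =
  match (insub r : option 'I_p), (insub c : option 'I_q) with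
  | Some r', Some c' => f r' c' | _, _ => 0 end.
Proof. by rewrite /mget; case: insub => // ?; case: insub => // ?; rewrite mxE. Qed.

Lemma mget_mx_mget p q p' q' (M : 'M[R]_(p', q')) r c :
  mget (\matrix_(i < p, j < q) mget M i j) r c =
  if (r < p)%N && (c < q)%N then mget M r c else 0.
Proof.
rewrite mget_mx; case: insubP => [i -> ri|/negbTE ->] //=.
by case: insubP => [j -> cj|/negbTE ->] //=; rewrite ri cj.
Qed.

Lemma mget_eq0 p q (M : 'M[R]_(p, q)) : (forall r c, mget M r c = 0) -> M = 0.
Proof. by move=> h; apply/matrixP => i j; rewrite -mget_ord h mxE. Qed.

Lemma mget_colE p (v : 'cV[R]_p) j : mget v j 0 = mget v j 0%N.
Proof. by []. Qed.

Lemma sum_mget p (f : R -> R) (v : 'cV[R]_p) N : (p <= N)%N -> f 0 = 0 ->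
  \sum_(i < p) f (v i 0) = \sum_(i < N) f (mget v i 0%N).
Proof.
move=> pN f0; rewrite -(subnKC pN) big_split_ord /=.
rewrite [X in _ + X]big1 ?addr0; last first.
  by move=> i _; rewrite mget_out ?f0 //= negb_and -leqNgt leq_addr.
by apply: eq_bigr => i _; rewrite -[v i 0]mget_ord.
Qed.

Lemma mget_mul p q (M : 'M[R]_(p, q)) (v : 'cV[R]_q) j N : (q <= N)%N ->
  mget (M *m v) j 0%N = \sum_(i < N) mget M j i * mget v i 0%N.
Proof.
move=> qN; have [jp|jp] := ltnP j p.
  have -> : j = Ordinal jp by [].
  rewrite -[(0%N : nat)]/(nat_of_ord (0 : 'I_1)) mget_ord mxE.
  rewrite -(subnKC qN) big_split_ord /= [X in _ + X]big1 ?addr0; last first.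
    by move=> i _; rewrite [mget M _ _]mget_out ?mul0r //= negb_and [(q + _ < _)%N]ltnNge leq_addr orbT.
  by apply: eq_bigr => i _; rewrite -[M _ i]mget_ord -[v i 0]mget_ord.
rewrite mget_out ?big1 // => [i _|]; last by rewrite /= ltnNge jp.
by rewrite mget_out ?mul0r //= ltnNge jp.
Qed.

Lemma mget_prepend1 q (v : 'cV[R]_q) j :
  mget (prepend1 v) j 0%N = if j == 0%N then 1 else mget v j.-1 0%N.
Proof.
rewrite /prepend1 mget_mx; case: insubP => [i _ ij|].
  case: insubP => [k _ _|]; last by []. 
  by rewrite /= ij.
case: j => [|j] /= h; first by []. by rewrite mget_out //= negb_and h.
Qed.


Lemma mget0 p q r c : mget (0 : 'M[R]_(p, q)) r c = 0.
Proof. by rewrite /mget; case: insub => // ?; case: insub => // ?; rewrite mxE. Qed.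

Lemma mgetZ p q a (M : 'M[R]_(p, q)) r c : mget (a *: M) r c = a * mget M r c.
Proof. by rewrite /mget; case: insub => [?|]; rewrite ?mulr0 //; case: insub => [?|]; rewrite ?mxE ?mulr0. Qed.

Lemma cV_eq0 p (u : 'cV[R]_p) : (u == 0) = [forall j : 'I_p, mget u j 0%N == 0].
Proof.
apply/eqP/forallP => [-> j|h]; first by rewrite mget0.
apply/matrixP => i k; rewrite ord1 -[u i 0]mget_ord (eqP (h i)) mxE //.
Qed.

Lemma vnorm_mget p (u : 'cV[R]_p) N : (p <= N)%N ->
  vnorm u = Num.sqrt (\sum_(i < N) (mget u i 0%N) ^+ 2).
Proof. by move=> pN; rewrite /vnorm (@sum_mget _ (fun x => x ^+ 2) u N) // expr0n. Qed.

Lemma radial_mget (h : R -> R) p q (u : 'cV[R]_p) (w : 'cV[R]_q) :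
  (forall j, mget u j 0%N = mget w j 0%N) ->
  forall j, mget (radial h u) j 0%N = mget (radial h w) j 0%N.
Proof.
move=> E j.
have Hn : vnorm u = vnorm w.
  rewrite (vnorm_mget u (leq_addr q p)) (vnorm_mget w (leq_addr p q)) [(q+p)%N]addnC.
  by congr Num.sqrt; apply: eq_bigr => i _; rewrite E.
have Hz : (u == 0) = (w == 0).
  rewrite !cV_eq0; apply/forallP/forallP => H i.
    by rewrite -E; case: (ltnP i p) => [ip|ip]; [rewrite -[nat_of_ord i]/(nat_of_ord (Ordinal ip)) (eqP (H (Ordinal ip))) | rewrite mget_out //= negb_and -leqNgt ip].
  by rewrite E; case: (ltnP i q) => [ip|ip]; [rewrite -[nat_of_ord i]/(nat_of_ord (Ordinal ip)) (eqP (H (Ordinal ip))) | rewrite mget_out //= negb_and -leqNgt ip].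
rewrite /radial Hz; case: (w == 0); first by rewrite !mget0.
by rewrite !mgetZ Hn E.
Qed.

Lemma nred_le L n i : (nred L n i <= n i)%N.
Proof.
case: i => [|i] //=; case: eqP => [->|_] //; exact: geq_minl.
Qed.


Definition rel L n (A : Param R L n) (B : Param R L (nred L n)) :=
 (forall (k : 'I_L) r c, (nred L n k.+1 <= r)%N -> (c <= nred L n k)%N ->
     mget (A k) r c = 0) /\
 (forall (k : 'I_L) r c, (r < nred L n k.+1)%N -> (c <= nred L n k)%N ->
     mget (A k) r c = mget (B k) r c).

Lemma ff_rel L n hs (A : Param R L n) (B : Param R L (nred L n)) x x' :
  rel A B -> (forall j, mget x j 0%N = mget x' j 0%N) ->
  forall k, (k <= L)%N -> forall j, mget (ff hs A k x) j 0%N = mget (ff hs B k x') j 0%N.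
Proof.
move=> [H1 H2] hx; elim => [|k IH] kL //=.
apply: radial_mget => j.
have IH' := IH (ltnW kL).
rewrite /Anat; case: insubP => [k0 _ ok|]; last by rewrite kL.
subst k.
rewrite (mget_mul _ _ _ (leqnn (n k0).+1)).
rewrite (mget_mul _ _ _ (nred_le L n k0 : (_ < (n k0).+1)%N)).
apply: eq_bigr => i _; rewrite !mget_mx_mget !mget_prepend1 IH'.
have [ile|igt] := leqP i (nred L n k0).
  rewrite -/(nred L n k0.+1) !ltnS ile (leq_trans ile (nred_le L n k0)) !andbT.
  have [jlt|jge] := ltnP j (nred L n k0.+1).
    by rewrite (leq_trans jlt (nred_le L n k0.+1)) H2.
  by case: ifP => _; rewrite ?H1 // mul0r.
have i0 : (nat_of_ord i == 0%N) = false by move: igt; case: (nat_of_ord i).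
rewrite i0 [mget (ff _ _ _ _) _ _]mget_out ?mulr0 //= negb_and -leqNgt; apply/orP; left; rewrite -ltnS prednK; [exact: igt | exact: leq_ltn_trans (leq0n _) igt].
Qed.


Lemma mget_vcast p q (v : 'cV[R]_p) j :
  mget (@vcast R p q v) j 0%N = if (j < q)%N then mget v j 0%N else 0.
Proof.
rewrite /vcast mget_mx; case: insubP => [i ji <-|/negbTE ->] //=.
by rewrite ltn_ord; case: insubP.
Qed.

Lemma loss_rel L n hs C data (A : Param R L n) (B : Param R L (nred L n)) :
  rel A B -> @loss R L n n hs C data A = @loss R L n (nred L n) hs C data B.
Proof.
move=> hr; apply: eq_bigr => d _; congr C; apply/matrixP => i j; rewrite !mxE.
apply: (ff_rel hs hr) => // r; by rewrite !mget_vcast.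
Qed.


Lemma mget_in p q (M : 'M[R]_(p, q)) r c (rp : (r < p)%N) (cq : (c < q)%N) :
  mget M r c = M (Ordinal rp) (Ordinal cq).
Proof. by rewrite -mget_ord. Qed.

Lemma mget_pert L m (A : Param R L m) k0 r0 c0 t k r c :
  mget (pert A k0 r0 c0 t k) r c = mget (A k) r c +
   (if [&& k == k0, r == r0, c == c0, (r < m k.+1)%N & (c < (m k).+1)%N] then t else 0).
Proof.
have [rp|rp] := leqP (m k.+1) r.
  by rewrite !andbF addr0 !mget_out // ltnNge rp.
have [cp|cp] := leqP (m k).+1 c.
  by rewrite !andbF addr0 !mget_out // [(c < _)%N]ltnNge cp andbF.
by rewrite !(mget_in _ rp cp) /pert !mxE /= !andbT andbA.
Qed.

Lemma int_mget L n (T : Param R L n) : is_int T ->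
  forall (k : 'I_L) r c, (nred L n k.+1 <= r)%N -> (c <= nred L n k)%N -> mget (T k) r c = 0.
Proof.
move=> hT k r c hr hc.
have [rp|rp] := ltnP r (n k.+1); last by rewrite mget_out //= negb_and -leqNgt rp.
have [cp|cp] := ltnP c (n k).+1; last by rewrite mget_out //= negb_and -!leqNgt cp orbT.
by rewrite (mget_in _ rp cp) hT.
Qed.

Lemma rel_iota L n (B : Param R L (nred L n)) : rel (iota_red B) B.
Proof.
split=> k r c hr hc; rewrite /iota_red mget_mx_mget.
  by case: ifP => // _; rewrite mget_out //= negb_and -leqNgt hr.
by rewrite (leq_trans hr (nred_le L n k.+1)) ltnS (leq_trans hc (nred_le L n k)).
Qed.

Lemma rel_q2 L n (T : ParamInt R L n) : rel (iota1 T) (q2 T).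
Proof.
case: T => T hT; split=> k r c hr hc /=; first exact: int_mget.
by rewrite /q2 mget_mx_mget hr ltnS hc.
Qed.


Lemma rel_pert_in L n (T : ParamInt R L n) (k0 : 'I_L) (r0 c0 : nat) (t : R) :
  (r0 < nred L n k0.+1)%N -> (c0 <= nred L n k0)%N ->
  rel (pert (iota1 T) k0 r0 c0 t) (pert (q2 T) k0 r0 c0 t).
Proof.
move=> h0r h0c; have [H1 H2] := rel_q2 T.
split=> k r c hr hc; rewrite !mget_pert.
  rewrite H1 // add0r; case: (k =P k0) => [ek|] //=; case: (r =P r0) => [er|] //=.
  by subst; move: h0r; rewrite ltnNge hr.
rewrite H2 // !ltnS hc (leq_trans hc (nred_le L n k)) hr (leq_trans hr (nred_le L n k.+1)).
by [].
Qed.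

Lemma rel_pert_out L n (T : ParamInt R L n) (k0 : 'I_L) (r0 c0 : nat) (t : R) :
  (nred L n k0 < c0)%N ->
  rel (pert (iota1 T) k0 r0 c0 t) (q2 T).
Proof.
move=> h0c; have [H1 H2] := rel_q2 T.
have F : forall (k : 'I_L) r c, (c <= nred L n k)%N ->
   (if [&& k == k0, r == r0, c == c0, (r < n k.+1)%N & (c < (n k).+1)%N] then t else 0) = 0.
  move=> k r c hc; case: (k =P k0) => [ek|] //=; case: (r =P r0) => [er|] //=.
  case: (c =P c0) => [ec|] //=; by subst; move: h0c; rewrite ltnNge hc.
split=> k r c hr hc; rewrite mget_pert F // addr0; [exact: H1 | exact: H2].
Qed.

End Aux.

Theorem lemma6 (R : realType) (L : nat) (n : nat -> nat)
  (hs : nat -> R -> R)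
  (hs_pd : forall i, (1 <= i <= L)%N -> piecewise_differentiable (hs i))
  (C : 'cV[R]_(n L) -> 'cV[R]_(n L) -> R)
  (data : seq ('cV[R]_(n 0%N) * 'cV[R]_(n L)))
  (HL : forall A : Param R L n,
     param_differentiable (@loss R L n n hs C data) A)
  (HLred : forall B : Param R L (nred L n),
     param_differentiable (@loss R L n (nred L n) hs C data) B) :
  let Lf := @loss R L n n hs C data in
  let Lred := @loss R L n (nred L n) hs C data in
  [/\ (@iota_red R L n = @iota1 R L n \o @iota2 R L n),
      Lf \o @iota_red R L n = Lred,
      (forall T : ParamInt R L n, Lf (iota1 T) = Lred (q2 T))
    & (forall T : ParamInt R L n,
         q1 (grad Lf (iota1 T)) = iota2 (grad Lred (q2 T)))].
Proof.
move=> Lf Lred; split.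
- by [].
- by apply: funext => B /=; apply: loss_rel; apply: rel_iota.
- by move=> T; apply: loss_rel; apply: rel_q2.
move=> T; apply: eq_sig_hprop => [x p q|]; first exact: Prop_irrelevance.
rewrite /=; apply: functional_extensionality_dep => k; apply/matrixP => r c.
rewrite /zero_block /pad !mxE.
case: ifP => [/andP[hr hc]|hrc].
  by rewrite mget_out //= negb_and -leqNgt hr.
rewrite /grad.
have [hc|hc] := leqP (nat_of_ord c) (nred L n k).
  have hr : (r < nred L n k.+1)%N by rewrite ltnNge; apply: contraFN hrc => ->.
  rewrite (mget_in _ hr (hc : (c < (nred L n k).+1)%N)) mxE /=.
  congr derive1; apply: funext => t /=.
  by apply: loss_rel; apply: rel_pert_in.
rewrite mget_out; last by rewrite negb_and [(c < _)%N]ltnNge -ltnS hc orbT.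
have -> : (fun t => Lf (pert (iota1 T) k r c t)) = cst (Lred (q2 T)).
  by apply: funext => t /=; apply: loss_rel; apply: rel_pert_out.
exact: derive1_cst.
Qed.
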